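(* Under the hypotheses of Proposition 1 (closed-loop scheme of the setting below, $\mathcal P_i(t)$ feasible for all $t$, $\ell_i^{\mathrm c}$ continuous with $\underline\alpha(\|(e,\delta u)\|)\le\ell_i^{\mathrm c}(e,\delta u)\le\overline\alpha(\|(e,\delta u)\|)$ for class-$\mathcal K_\infty$ functions $\underline\alpha,\overline\alpha$, and $V_i^{\mathrm c}\ge0$), suppose in addition that there exist $\bar t\in\mathbb Z_+$ and a pair $(\bar x_i^{\mathrm c,\star},\bar u_i^{\mathrm c,\star})$ such that $\bar x^{\mathrm c,\ast}_i(t)=\bar x_i^{\mathrm c,\star}$ and $\bar u^{\mathrm c,\ast}_i(t)=\bar u_i^{\mathrm c,\star}$ for all $t\ge\bar t$. Then $x_i(t)\to\bar x_i^{\mathrm c,\star}$ and $u_i(t)\to\bar u_i^{\mathrm c,\star}$ as $t\to\infty$.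
   Context: A function $\alpha:\mathbb R_+\to\mathbb R_+$ is of class $\mathcal K_\infty$ if it is continuous, strictly increasing, $\alpha(0)=0$ and $\alpha(s)\to\infty$ as $s\to\infty$. Setting. Agents $\mathcal I=\{1,\dots,M\}$. Agent $i$ has dynamics $x_i(t+1)=f_i(x_i(t),u_i(t))$, $x_i\in\mathbb R^{n_i}$, $u_i\in\mathbb R^{m_i}$, admissible sets $\mathcal X_i\subset\mathbb R^{n_i}$, $\mathcal U_i\subset\mathbb R^{m_i}$, position $p_i=C_ix_i\in\mathbb R^{n_p}$, body radius $r_i>0$, body $\mathcal B_i(t)=\mathbb B(p_i(t),r_i)$ (closed Euclidean ball), reference state $x_i^{\mathrm{ref}}$. A deterministic safe-set generator $\Gamma_i$ assigns to each $x\in\mathcal X_i$ a ball $\Gamma_i(x)=\mathbb B(c_i(x),R_i(x))$. The active safe set at time $t$ is $S_i^\ast(t)=\mathbb B(c_i(t),R_i(t))$. $h:\mathbb R^{n_p}\to\mathbb R$ is a continuous obstacle function. Horizons $N_{\mathrm n},N_{\mathrm c}\in\mathbb Z_{>0}$. Costs: nominal stage and terminal costs $\ell_i^{\mathrm n},V_i^{\mathrm n}$, nonnegative offset cost $V_i^{\mathrm c}$, nonnegative contingency stage cost $\ell_i^{\mathrm c}$, weight $\gamma>0$. Problem $\mathcal P_i(t)$ (given $x_i(t)$, $S_i^\ast(t)$ and a bound $\hat J_i^{\mathrm c}(t)\ge0$): decision variables $x^{\mathrm n}_{i,(k|t)}$ ($k=0..N_{\mathrm n}$), $u^{\mathrm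 n}_{i,(k|t)}$ ($k=0..N_{\mathrm n}-1$), $x^{\mathrm c}_{i,(k|t)}$ ($k=0..N_{\mathrm c}$), $u^{\mathrm c}_{i,(k|t)}$ ($k=0..N_{\mathrm c}-1$), $\bar x^{\mathrm c}_i(t),\bar u^{\mathrm c}_i(t)$; write $p^\bullet_{i,(k|t)}=C_ix^\bullet_{i,(k|t)}$. Minimize $J_i=\sum_{k=0}^{N_{\mathrm n}-1}\ell_i^{\mathrm n}(x^{\mathrm n}_{i,(k|t)},u^{\mathrm n}_{i,(k|t)})+V_i^{\mathrm n}(x^{\mathrm n}_{i,(N_{\mathrm n}|t)},x_i^{\mathrm{ref}})+\gamma V_i^{\mathrm c}(\bar x^{\mathrm c}_i(t),x_i^{\mathrm{ref}})$ subject to: (N1) $x^{\mathrm n}_{i,(0|t)}=x_i(t)$; (N2) $u^{\mathrm n}_{i,(0|t)}=u^{\mathrm c}_{i,(0|t)}$; (N3) $x^{\mathrm n}_{i,(k+1|t)}=f_i(x^{\mathrm n}_{i,(k|t)},u^{\mathrm n}_{i,(k|t)})$, $x^{\mathrm n}_{i,(k+1|t)}\in\mathcal X_i$, $u^{\mathrm n}_{i,(k|t)}\in\mathcal U_i$ for $k=0..N_{\mathrm n}-1$; (C1) $x^{\mathrm c}_{i,(0|t)}=x_i(t)$; (C2) $x^{\mathrm c}_{i,(k+1|t)}=f_i(x^{\mathrm c}_{i,(k|t)},u^{\mathrm c}_{i,(k|t)})$ for $k=0..N_{\mathrm c}-1$; (C3) $x^{\mathrm c}_{i,(k+1|t)}\in\mathcal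 X_i$, $u^{\mathrm c}_{i,(k|t)}\in\mathcal U_i$ for $k=0..N_{\mathrm c}-1$; (C4) $h(p^{\mathrm c}_{i,(k|t)})\ge0$ for $k=0..N_{\mathrm c}$; (C5) $x^{\mathrm c}_{i,(N_{\mathrm c}|t)}=\bar x^{\mathrm c}_i(t)$, $\bar x^{\mathrm c}_i(t)=f_i(\bar x^{\mathrm c}_i(t),\bar u^{\mathrm c}_i(t))$, $(\bar x^{\mathrm c}_i(t),\bar u^{\mathrm c}_i(t))\in\mathcal X_i\times\mathcal U_i$; (C6) $C_i\bar x^{\mathrm c}_i(t)\in S_i^\ast(t)$; (C7) $\|p^{\mathrm c}_{i,(k|t)}-c_i(t)\|\le R_i(t)-r_i$ for $k=0..N_{\mathrm c}$; (C8) $\|p^{\mathrm c}_{i,(l|t)}-c_i(x^{\mathrm c}_{i,(k|t)})\|\le R_i(x^{\mathrm c}_{i,(k|t)})-r_i$ for all $0\le k\le l\le N_{\mathrm c}$; (L) $J_i^{\mathrm c}(t)\le\hat J_i^{\mathrm c}(t)$, where $J_i^{\mathrm c}(t):=\sum_{k=0}^{N_{\mathrm c}-1}\ell_i^{\mathrm c}(x^{\mathrm c}_{i,(k|t)}-\bar x^{\mathrm c}_i(t),u^{\mathrm c}_{i,(k|t)}-\bar u^{\mathrm c}_i(t))+V_i^{\mathrm c}(\bar x^{\mathrm c}_i(t),x_i^{\mathrm{ref}})$. Closed loop: at each $t$ each agent solves $\mathcal P_i(t)$, a star denotes the optimal solution, $J_i^{\mathrm c,\ast}(t)$ is $J_i^{\mathrm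 c}$ evaluated at it, the input $u_i(t)=u^{\mathrm c,\ast}_{i,(0|t)}=u^{\mathrm n,\ast}_{i,(0|t)}$ is applied and the state evolves exactly by $x_i(t+1)=f_i(x_i(t),u_i(t))$. Bound update: $\hat J_i^{\mathrm c}(t+1):=J_i^{\mathrm c,\ast}(t)-\ell_i^{\mathrm c}(x_i(t)-\bar x^{\mathrm c,\ast}_i(t),u_i(t)-\bar u^{\mathrm c,\ast}_i(t))$. Freeze-or-shift (FoS) update: $\tilde S_i(t+1):=\Gamma_i(x_i(t+1))$; $\chi_i(t)=1$ if some $j\neq i$ has $\tilde S_i(t+1)\cap\tilde S_j(t+1)\neq\emptyset$ or $\tilde S_i(t+1)\cap S_j^\ast(t)\neq\emptyset$, else $\chi_i(t)=0$; $S_i^\ast(t+1)=S_i^\ast(t)$ if $\chi_i(t)=1$ and $S_i^\ast(t+1)=\tilde S_i(t+1)$ if $\chi_i(t)=0$. *)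

(* Defs.v *)
From HB Require Import structures.
From mathcomp Require Import all_boot all_order all_algebra.
From mathcomp Require Import all_classical all_reals all_analysis.
Set Implicit Arguments. Unset Strict Implicit. Unset Printing Implicit Defensive.
Import Order.TTheory GRing.Theory Num.Theory.
Import numFieldNormedType.Exports.
Local Open Scope classical_set_scope.
Local Open Scope ring_scope.

Definition enorm (R : realType) (d : nat) (v : 'cV[R]_d) : R :=
  Num.sqrt (\sum_(k < d) (v k ord0) ^+ 2).

(* Class K_infinity function R_+ -> R_+, represented as a function R -> R
   whose behaviour on [0, +oo) is constrained. *)
Definition Kinf (R : realType) (a : R -> R) : Prop :=
  [/\ {within [set s : R | 0 <= s], continuous a},
      (forall s1 s2 : R, 0 <= s1 -> s1 < s2 -> a s1 < a s2),
      a 0 = 0 &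
      a s @[s --> +oo] --> +oo].

Record sball (R : realType) (np : nat) := SBall { sc : 'cV[R]_np ; srad : R }.

Definition inball (R : realType) (np : nat) (p : 'cV[R]_np) (B : sball R np) : Prop :=
  enorm (p - sc B) <= srad B.

Definition balls_meet (R : realType) (np : nat) (B1 B2 : sball R np) : Prop :=
  exists p, inball p B1 /\ inball p B2.

Record agent (R : realType) (np : nat) := Agent {
  adx : nat;
  adu : nat;
  af : 'cV[R]_adx -> 'cV[R]_adu -> 'cV[R]_adx;
  aX : set 'cV[R]_adx;
  aU : set 'cV[R]_adu;
  aC : 'M[R]_(np, adx);
  ar : R;
  axref : 'cV[R]_adx;
  aGamma : 'cV[R]_adx -> sball R np;
  aln : 'cV[R]_adx -> 'cV[R]_adu -> R;
  aVn : 'cV[R]_adx -> 'cV[R]_adx -> R;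
  aVc : 'cV[R]_adx -> 'cV[R]_adx -> R;
  alc : 'cV[R]_adx -> 'cV[R]_adu -> R
}.

Arguments af {R np} a _ _.
Arguments aX {R np} a _.
Arguments aU {R np} a _.
Arguments aGamma {R np} a _.
Arguments aln {R np} a _ _.
Arguments aVn {R np} a _ _.
Arguments aVc {R np} a _ _.
Arguments alc {R np} a _ _.

(* Decision variables of P_i(t); trajectories indexed by k : nat, only
   k = 0..N are relevant. *)
Record sol (R : realType) (np : nat) (A : agent R np) := Sol {
  xn : nat -> 'cV[R]_(adx A);
  un : nat -> 'cV[R]_(adu A);
  xc : nat -> 'cV[R]_(adx A);
  uc : nat -> 'cV[R]_(adu A);
  xb : 'cV[R]_(adx A);
  ub : 'cV[R]_(adu A)
}.

Section Problem.
Variables (R : realType) (np : nat) (A : agent R np).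
Variables (h : 'cV[R]_np -> R) (Nn Nc : nat) (gamma : R).

Definition cost_J (s : sol A) : R :=
  \sum_(k < Nn) aln A (xn s k) (un s k) + aVn A (xn s Nn) (axref A)
  + gamma * aVc A (xb s) (axref A).

Definition cost_Jc (s : sol A) : R :=
  \sum_(k < Nc) alc A (xc s k - xb s) (uc s k - ub s) + aVc A (xb s) (axref A).

Definition feasible (x0 : 'cV[R]_(adx A)) (S : sball R np) (Jhat : R) (s : sol A) : Prop :=
     xn s 0 = x0
  /\ un s 0 = uc s 0
  /\ (forall k, (k < Nn)%N ->
        [/\ xn s k.+1 = af A (xn s k) (un s k), aX A (xn s k.+1) & aU A (un s k)])
  /\ xc s 0 = x0
  /\ (forall k, (k < Nc)%N ->
        [/\ xc s k.+1 = af A (xc s k) (uc s k), aX A (xc s k.+1) & aU A (uc s k)])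
  /\ (forall k, (k <= Nc)%N -> 0 <= h (aC A *m xc s k))
  /\ [/\ xc s Nc = xb s, xb s = af A (xb s) (ub s), aX A (xb s) & aU A (ub s)]
  /\ inball (aC A *m xb s) S
  /\ (forall k, (k <= Nc)%N -> enorm (aC A *m xc s k - sc S) <= srad S - ar A)
  /\ (forall k l, (k <= l)%N -> (l <= Nc)%N ->
        enorm (aC A *m xc s l - sc (aGamma A (xc s k)))
          <= srad (aGamma A (xc s k)) - ar A)
  /\ cost_Jc s <= Jhat.

Definition optimal (x0 : 'cV[R]_(adx A)) (S : sball R np) (Jhat : R) (s : sol A) : Prop :=
  feasible x0 S Jhat s /\ (forall s', feasible x0 S Jhat s' -> cost_J s <= cost_J s').

End Problem.

Definition closed_loop (R : realType) (np M : nat) (A : 'I_M -> agent R np)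
  (h : 'cV[R]_np -> R) (Nn Nc : nat) (gamma : R)
  (x : forall i, nat -> 'cV[R]_(adx (A i)))
  (S : 'I_M -> nat -> sball R np) (Jhat : 'I_M -> nat -> R)
  (s : forall i, nat -> sol (A i)) : Prop :=
  [/\ (forall i, 0 <= Jhat i 0),
      (forall i t, optimal h Nn Nc gamma (x i t) (S i t) (Jhat i t) (s i t)),
      (forall i t, x i t.+1 = af (A i) (x i t) (uc (s i t) 0)),
      (forall i t, Jhat i t.+1 = cost_Jc Nc (s i t)
                     - alc (A i) (x i t - xb (s i t)) (uc (s i t) 0 - ub (s i t))) &
      (forall i t,
         let Stil := fun j => aGamma (A j) (x j t.+1) in
         let chi := exists j, j != i /\
                      (balls_meet (Stil i) (Stil j) \/ balls_meet (Stil i) (S j t)) in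
         (chi -> S i t.+1 = S i t) /\ (~ chi -> S i t.+1 = Stil i))].
Arguments closed_loop {R np M} A h Nn Nc gamma x S Jhat s.

(* Main.v *)
Set Warnings "-all".
Require Import Defs.
From HB Require Import structures.
From mathcomp Require Import all_boot all_order all_algebra.
From mathcomp Require Import all_classical all_reals all_analysis.
From mathcomp Require Import lra.
Import Order.TTheory GRing.Theory Num.Theory.
Import numFieldNormedType.Exports.
Local Open Scope classical_set_scope.
Local Open Scope ring_scope.

Lemma entry_le_enorm (R : realType) (n m : nat) (v : 'cV[R]_n) (w : 'cV[R]_m) k :
  `|v k ord0| <= enorm (col_mx v w).
Proof.
rewrite /enorm -sqrtr_sqr ler_sqrt ?sumr_ge0 // => [|j _]; last exact: sqr_ge0.
rewrite (bigD1 (lshift m k)) //= col_mxEu lerDl sumr_ge0 // => j _.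
exact: sqr_ge0.
Qed.

Lemma entry_le_enorm_r (R : realType) (n m : nat) (v : 'cV[R]_n) (w : 'cV[R]_m) k :
  `|w k ord0| <= enorm (col_mx v w).
Proof.
rewrite /enorm -sqrtr_sqr ler_sqrt ?sumr_ge0 // => [|j _]; last exact: sqr_ge0.
rewrite (bigD1 (rshift n k)) //= col_mxEd lerDl sumr_ge0 // => j _.
exact: sqr_ge0.
Qed.

Lemma mx_norm_small (R : realType) (n : nat) (v : 'cV[R]_n) (e : R) :
  0 <= e -> (forall k, `|v k ord0| <= e) -> `|v| <= e.
Proof.
move=> e0 H.
have -> : `|v| = mx_norm v by [].
rewrite mx_normE -[e]/((NngNum e0)%:num) num_le; apply/bigmax_leP; split => //.
move=> [a b] _ /=; rewrite -num_le /=.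
by rewrite (ord1 b).
Qed.

Lemma Kinf_ge0 (R : realType) (a : R -> R) s : Kinf a -> 0 <= s -> 0 <= a s.
Proof.
case=> _ inc a0 _ s0; rewrite -a0; case: (ltrP 0 s) => [/(inc 0 s (lexx 0))/ltW//|].
by move=> ss; have -> : s = 0 by apply/eqP; rewrite eq_le ss s0.
Qed.

Lemma Kinf_inv (R : realType) (a : R -> R) s e : Kinf a -> 0 <= s -> 0 <= e ->
  a s < a e -> s < e.
Proof.
case=> _ inc _ _ s0 e0 H; rewrite ltNge; apply/negP => es.
move: es; rewrite le_eqVlt => /orP[/eqP es|/(inc _ _ e0)]; first by rewrite es ltxx in H.
by move=> /(lt_trans H); rewrite ltxx.
Qed.

Theorem corollary2 (R : realType) (np M : nat) (A : 'I_M -> agent R np)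
  (h : 'cV[R]_np -> R) (Nn Nc : nat) (gamma : R)
  (x : forall i, nat -> 'cV[R]_(adx (A i)))
  (S : 'I_M -> nat -> sball R np) (Jhat : 'I_M -> nat -> R)
  (s : forall i, nat -> sol (A i)) (i : 'I_M) (alo ahi : R -> R) :
  (0 < Nn)%N -> (0 < Nc)%N -> 0 < gamma -> continuous h ->
  (forall j, 0 < ar (A j)) ->
  closed_loop A h Nn Nc gamma x S Jhat s ->
  continuous (fun p : 'cV[R]_(adx (A i)) * 'cV[R]_(adu (A i)) => alc (A i) p.1 p.2) ->
  Kinf alo -> Kinf ahi ->
  (forall e du, alo (enorm (col_mx e du)) <= alc (A i) e du
                /\ alc (A i) e du <= ahi (enorm (col_mx e du))) ->
  (forall a b, 0 <= aVc (A i) a b) ->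
  forall (tbar : nat) (xs : 'cV[R]_(adx (A i))) (us : 'cV[R]_(adu (A i))),
  (forall t, (tbar <= t)%N -> xb (s i t) = xs /\ ub (s i t) = us) ->
  x i t @[t --> \oo] --> xs /\ uc (s i t) 0 @[t --> \oo] --> us.
Proof.
move=> _ _ _ _ _ [J0 Hopt Hx HJ _] _ Klo _ Hb HVc tbar xs us Hbar.
have en0 : forall d (v : 'cV[R]_d), 0 <= enorm v by move=> d v; exact: sqrtr_ge0.
have lc0 : forall e du, 0 <= alc (A i) e du.
  by move=> e du; apply: le_trans (Hb e du).1; apply: Kinf_ge0.
pose l t := alc (A i) (x i t - xb (s i t)) (uc (s i t) 0 - ub (s i t)).
have JcJ : forall t, cost_Jc Nc (s i t) <= Jhat i t.
  move=> t; have [F _] := Hopt i t.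
  by case: F => _ [_ [_ [_ [_ [_ [_ [_ [_ [_ HL]]]]]]]]].
have Jc0 : forall t, 0 <= cost_Jc Nc (s i t).
  by move=> t; rewrite /cost_Jc addr_ge0 // sumr_ge0.
have step : forall t, l t <= Jhat i t - Jhat i t.+1.
  by move=> t; rewrite HJ /l; have := JcJ t; lra.
have Jge0 : forall t, 0 <= Jhat i t by move=> t; exact: le_trans (JcJ t).
have Jdec : nonincreasing_seq (Jhat i).
  apply/nonincreasing_seqP => t; move: (step t) (lc0 (x i t - xb (s i t)) (uc (s i t) 0 - ub (s i t))).
  rewrite -/(l t) => a b; have := le_trans b a; by rewrite subr_ge0.
have Jcv : cvgn (Jhat i).
  apply: nonincreasing_is_cvgn => //; exists 0 => _ [t _ <-]; exact: Jge0.
have Dcv : (fun t => Jhat i t - Jhat i t.+1) @ \oo --> (0 : R).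
  rewrite -(subrr (limn (Jhat i))); apply: cvgB => //.
  by rewrite cvg_shiftS.
have key : forall eps, 0 < eps -> \forall t \near \oo,
   enorm (col_mx (x i t - xs) (uc (s i t) 0 - us)) < eps.
  move=> eps eps0.
  have aeps : 0 < alo eps.
    by case: Klo => _ inc a0 _; rewrite -a0; apply: inc.
  move/cvgrPdist_lt: Dcv => /(_ _ aeps) D.
  near=> t.
  have /Hbar [xbE ubE] : (tbar <= t)%N by near: t; exact: nbhs_infty_ge.
  have Dt : `|0 - (Jhat i t - Jhat i t.+1)| < alo eps by near: t; exact: D.
  apply: (@Kinf_inv R alo _ eps Klo); [exact: en0|exact: ltW|].
  apply: le_lt_trans (Hb _ _).1 _.
  rewrite -xbE -ubE -/(l t); apply: le_lt_trans (step t) _.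
  move: Dt; rewrite sub0r normrN.
  by apply: le_lt_trans; exact: ler_norm.
split.
- apply/cvgrPdistC_lt => eps eps0.
  have e2 : 0 < eps / 2 by rewrite divr_gt0.
  move: (key _ e2) => K.
  near=> t.
  have Kt : enorm (col_mx (x i t - xs) (uc (s i t) 0 - us)) < eps / 2 by near: t; exact: K.
  apply: le_lt_trans (_ : eps / 2 < eps); last by lra.
  apply: mx_norm_small; first exact: ltW.
  move=> k; apply: le_trans (ltW Kt); exact: entry_le_enorm.
- apply/cvgrPdistC_lt => eps eps0.
  have e2 : 0 < eps / 2 by rewrite divr_gt0.
  move: (key _ e2) => K.
  near=> t.
  have Kt : enorm (col_mx (x i t - xs) (uc (s i t) 0 - us)) < eps / 2 by near: t; exact: K.
  apply: le_lt_trans (_ : eps / 2 < eps); last by lra.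
  apply: mx_norm_small; first exact: ltW.
  move=> k; apply: le_trans (ltW Kt); exact: entry_le_enorm_r.
Unshelve. all: by end_near.
Qed.
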